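(* For any category $\mathbf{E}$, the virtual double category $\mathbb{C}\mathrm{ospan}(\mathbf{E})$ has globular decompositions.
   Context: A virtual double category (VDC) has objects, tight arrows, loose arrows, and $n$-ary multicells from a composable path of $n$ loose arrows (an object when $n=0$) to a loose arrow with two tight sides, with identities and associative unital composition $\frac{\alpha_1\cdots\alpha_m}{\beta}$. A multicell is globular if its tight sides are identities. Globular decompositions: for $n\ge0$, $\mathbb{D}$ has $n$-ary globular decompositions if for every $n$-ary multicell $\alpha$ and every $m\ge1$ and $k_1+\cdots+k_m=n$ ($k_i\ge0$), $\alpha$ can be written as $\frac{\alpha_1\cdots\alpha_m}{\beta}$ with $\alpha_i$ $k_i$-ary and $\beta$ a globular $m$-ary multicell, and any two such decompositions are equivalent under the equivalence relation generated by $(\frac{\alpha_1}{\sigma_1},\dots,\frac{\alpha_m}{\sigma_m};\beta)\sim(\alpha_1,\dots,\alpha_m;\frac{\sigma_1\cdots\sigma_m}{\beta})$ for compatible rows $(\sigma_1,\dots,\sigma_m)$ of unary multicells whose outermost tight sides are identities. $\mathbb{D}$ has globular decompositions if it has $n$-ary globular decompositions for all $n\ge0$. $\mathbb{C}\mathrm{ospan}(\mathbf{E})$ has tight category $\mathbf{E}$, loose arrows the cospans $x\xrightarrow{a}z\xleftarrow{b}y$, and $n$-ary multicells from $x_{i-1}\xrightarrow{a_i}y_i\xleftarrow{b_i}x_i$ ($1\le i\le n$) to $z_0\xrightarrow{d_0}w\xleftarrow{d_1}z_1$ with tight sides $c_0,c_1$ given by morphisms $e_i:y_i\to w$ with $e_1a_1=d_0c_0$,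 $e_ib_i=e_{i+1}a_{i+1}$, $e_nb_n=d_1c_1$ (for $n=0$ the condition $d_0c_0=d_1c_1$); composition by pasting. *)

(* Defs.v *)
From Stdlib Require Import List Relations.
Import ListNotations.

Record Category : Type := {
  Ob : Type;
  Hom : Ob -> Ob -> Type;
  idm : forall x, Hom x x;
  comp : forall {x y z}, Hom y z -> Hom x y -> Hom x z;
  comp_id_l : forall x y (f : Hom x y), comp (idm y) f = f;
  comp_id_r : forall x y (f : Hom x y), comp f (idm x) = f;
  comp_assoc : forall x y z t (f : Hom z t) (g : Hom y z) (h : Hom x y),
      comp f (comp g h) = comp (comp f g) h
}.
Arguments Hom {c} _ _.
Arguments idm {c} _.
Arguments comp {c x y z} _ _.

Section CospanVDC.
Context {E : Category}.

(** Loose arrows of Cospan(E): cospans x --lleg--> apex <--rleg-- y *)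
Record Cospan (x y : Ob E) : Type := {
  apex : Ob E;
  lleg : Hom x apex;
  rleg : Hom y apex
}.
Arguments apex {x y} _.
Arguments lleg {x y} _.
Arguments rleg {x y} _.

Inductive Path : Ob E -> Ob E -> Type :=
| pnil (x : Ob E) : Path x x
| pcons {x y z : Ob E} (C : Cospan x y) (r : Path y z) : Path x z.

Fixpoint plength {x y} (p : Path x y) : nat :=
  match p with pnil _ => 0 | pcons _ r => S (plength r) end.

Fixpoint app {x y z} (p : Path x y) : Path y z -> Path x z :=
  match p in Path x y return Path y z -> Path x z with
  | pnil _ => fun q => q
  | pcons C r => fun q => pcons C (app r q)
  end.

Fixpoint Legs {x y} (p : Path x y) (w : Ob E) : Type :=
  match p with
  | pnil _ => unit
  | pcons C r => (Hom (apex C) w * Legs r w)%type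
  end.

Fixpoint legs_ok {x y} (p : Path x y) {w : Ob E} :
    Hom x w -> Hom y w -> Legs p w -> Prop :=
  match p in Path x y return Hom x w -> Hom y w -> Legs p w -> Prop with
  | pnil _ => fun f g _ => f = g
  | pcons C r => fun f g l =>
      comp (fst l) (lleg C) = f /\ legs_ok r (comp (fst l) (rleg C)) g (snd l)
  end.

(** n-ary multicells of Cospan(E) from the path p to the cospan T,
    with tight sides c0, c1. *)
Definition Cell {x y z0 z1} (p : Path x y) (T : Cospan z0 z1)
    (c0 : Hom x z0) (c1 : Hom y z1) : Type :=
  { l : Legs p (apex T) | legs_ok p (comp (lleg T) c0) (comp (rleg T) c1) l }.

Definition cell_legs {x y z0 z1} {p : Path x y} {T : Cospan z0 z1} {c0 c1}
  (a : Cell p T c0 c1) : Legs p (apex T) := proj1_sig a.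

Fixpoint legs_post {x y} (p : Path x y) {w w'} (h : Hom w w') : Legs p w -> Legs p w' :=
  match p return Legs p w -> Legs p w' with
  | pnil _ => fun _ => tt
  | pcons C r => fun l => (comp h (fst l), legs_post r h (snd l))
  end.

Fixpoint legs_app {x y z} (p : Path x y) {w} :
    forall q : Path y z, Legs p w -> Legs q w -> Legs (app p q) w :=
  match p in Path x y return forall q : Path y z, Legs p w -> Legs q w -> Legs (app p q) w with
  | pnil _ => fun q _ lq => lq
  | pcons C r => fun q lp lq => (fst lp, legs_app r q (snd lp) lq)
  end.

(** Rows of multicells (alpha_1, ..., alpha_m) with compatible tight sides:
    [Row p q s s'] has source the concatenation p of the sources of the
    alpha_i, target path q = (C_1,...,C_m) of their targets, leftmost tight
    side s and rightmost tight side s'. *)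
Inductive Row : forall {u u' v v' : Ob E}, Path u u' -> Path v v' -> Hom u v -> Hom u' v' -> Type :=
| rnil (u v : Ob E) (s : Hom u v) : Row (pnil u) (pnil v) s s
| rcons {u u1 u' v v1 v' : Ob E} {p1 : Path u u1} {C : Cospan v v1}
    {s : Hom u v} {s1 : Hom u1 v1} (alpha : Cell p1 C s s1)
    {p2 : Path u1 u'} {q : Path v1 v'} {s' : Hom u' v'}
    (rest : Row p2 q s1 s') : Row (app p1 p2) (pcons C q) s s'.

Fixpoint row_arities {u u' v v'} {p : Path u u'} {q : Path v v'} {s s'}
    (r : @Row u u' v v' p q s s') : list nat :=
  match r with
  | rnil _ _ _ => []
  | @rcons _ _ _ _ _ _ p1 _ _ _ _ _ _ _ rest => plength p1 :: row_arities rest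
  end.

(** Legs of the composite (alpha_1 ... alpha_m) / beta, given the legs of beta. *)
Fixpoint compose_legs {w : Ob E} {u u' v v'} {p : Path u u'} {q : Path v v'} {s s'}
    (r : @Row u u' v v' p q s s') : Legs q w -> Legs p w :=
  match r in @Row u u' v v' p q s s' return Legs q w -> Legs p w with
  | rnil _ _ _ => fun _ => tt
  | @rcons _ _ _ _ _ _ p1 _ _ _ alpha p2 _ _ rest =>
      fun lb => legs_app p1 p2 (legs_post p1 (fst lb) (cell_legs alpha))
                         (compose_legs rest (snd lb))
  end.

(** [VRel ra rs rg] : the row rg is the row of vertical composites
    alpha_i / sigma_i of the row ra = (alpha_i) with a row rs = (sigma_i) of
    UNARY multicells. *)
Inductive VRel : forall {u u' v v' x x' : Ob E} {p : Path u u'} {q : Path v v'}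
    {q' : Path x x'} {s s' t t' g g'},
    @Row u u' v v' p q s s' -> @Row v v' x x' q q' t t' ->
    @Row u u' x x' p q' g g' -> Prop :=
| vnil (u v x : Ob E) (s : Hom u v) (t : Hom v x) (g : Hom u x) :
    g = comp t s -> VRel (rnil u v s) (rnil v x t) (rnil u x g)
| vcons {u u1 u' v v1 v' x x1 x' : Ob E}
    {p1 : Path u u1} {C : Cospan v v1} {C' : Cospan x x1}
    {s : Hom u v} {s1 : Hom u1 v1} {t : Hom v x} {t1 : Hom v1 x1}
    {g : Hom u x} {g1 : Hom u1 x1}
    (alpha : Cell p1 C s s1) (sigma : Cell (pcons C (pnil v1)) C' t t1)
    (gamma : Cell p1 C' g g1)
    {p2 : Path u1 u'} {q : Path v1 v'} {q' : Path x1 x'}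
    {s' : Hom u' v'} {t' : Hom v' x'} {g' : Hom u' x'}
    (ra : Row p2 q s1 s') (rs : Row q q' t1 t') (rg : Row p2 q' g1 g') :
    g = comp t s ->
    cell_legs gamma = legs_post p1 (fst (cell_legs sigma)) (cell_legs alpha) ->
    VRel ra rs rg ->
    VRel (rcons alpha ra) (@rcons v v1 v' x x1 x' (pcons C (pnil v1)) C' t t1 sigma q q' t' rs)
         (rcons gamma rg).

(** Candidate globular decompositions of a multicell p => T with tight sides
    c0, c1: a row (alpha_1..alpha_m) from p to some path q : z0 -> z1 with
    outer tight sides c0, c1, and a globular multicell beta : q => T. *)
Definition DecData {x y z0 z1} (p : Path x y) (T : Cospan z0 z1)
    (c0 : Hom x z0) (c1 : Hom y z1) : Type :=
  { q : Path z0 z1 & (Row p q c0 c1 * Cell q T (idm z0) (idm z1))%type }.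

(** d is a globular decomposition of alpha with arities ks:
    alpha = (alpha_1 ... alpha_m)/beta with alpha_i k_i-ary.
    (The tight sides of the composite are id o c0, id o c1 = c0, c1.) *)
Definition is_glob_decomp {x y z0 z1} {p : Path x y} {T : Cospan z0 z1} {c0 c1}
    (alpha : Cell p T c0 c1) (ks : list nat) (d : DecData p T c0 c1) : Prop :=
  row_arities (fst (projT2 d)) = ks /\
  compose_legs (fst (projT2 d)) (cell_legs (snd (projT2 d))) = cell_legs alpha.

(** Generating relation: (alpha_1/sigma_1, ..., alpha_m/sigma_m ; beta)
    ~ (alpha_1, ..., alpha_m ; (sigma_1 ... sigma_m)/beta), for a row of
    unary multicells sigma_i whose outermost tight sides are identities. *)
Definition slide_rel {x y z0 z1} {p : Path x y} {T : Cospan z0 z1} {c0 c1}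
    (d1 d2 : DecData p T c0 c1) : Prop :=
  exists sigma : Row (projT1 d2) (projT1 d1) (idm z0) (idm z1),
    VRel (fst (projT2 d2)) sigma (fst (projT2 d1)) /\
    cell_legs (snd (projT2 d2)) = compose_legs sigma (cell_legs (snd (projT2 d1))).

Definition decomp_equiv {x y z0 z1} {p : Path x y} {T : Cospan z0 z1} {c0 c1} :
  relation (DecData p T c0 c1) := clos_refl_sym_trans _ slide_rel.

Definition cospan_has_nary_globular_decompositions (n : nat) : Prop :=
  forall (x y z0 z1 : Ob E) (p : Path x y) (T : Cospan z0 z1)
         (c0 : Hom x z0) (c1 : Hom y z1) (alpha : Cell p T c0 c1)
         (ks : list nat),
    plength p = n -> ks <> [] -> list_sum ks = n ->
    (exists d, is_glob_decomp alpha ks d) /\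
    (forall d d', is_glob_decomp alpha ks d -> is_glob_decomp alpha ks d' ->
                  decomp_equiv d d').

Definition cospan_has_globular_decompositions : Prop :=
  forall n : nat, cospan_has_nary_globular_decompositions n.

End CospanVDC.

(* Main.v *)
From Stdlib Require Import List Relations Lia Program.Equality.
Require Import Defs.
Import ListNotations.

Section S.
Context {E : Category}.

Lemma legs_post_id {x y : Ob E} (p : Path x y) (w : Ob E) (l : Legs p w) : legs_post p (idm w) l = l.
Proof.
  induction p; simpl. - now destruct l. - destruct l; simpl; rewrite comp_id_l, IHp; reflexivity.
Qed.

Lemma legs_post_ok {x y : Ob E} (p : Path x y) (w w' : Ob E) (h : Hom w w') (f : Hom x w) g l :
  legs_ok p f g l -> legs_ok p (comp h f) (comp h g) (legs_post p h l).
Proof.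
  revert f; induction p; intros f H; simpl in *.
  - now subst.
  - destruct l as [e l]; destruct H as [H1 H2]; simpl; split.
    + subst; now rewrite <- comp_assoc.
    + rewrite <- comp_assoc; apply IHp; auto.
Qed.

Lemma legs_ok_end {x y : Ob E} (p : Path x y) (w : Ob E) (f : Hom x w) g g' l :
  legs_ok p f g l -> legs_ok p f g' l -> g = g'.
Proof.
  revert f; induction p; intros f H H'; simpl in *.
  - congruence.
  - destruct l; destruct H, H'; eauto.
Qed.

Lemma legs_app_inj {x y z : Ob E} (p1 : Path x y) (p2 : Path y z) (w : Ob E) a b a' b' :
  legs_app p1 p2 (w:=w) a b = legs_app p1 p2 a' b' -> a = a' /\ b = b'.
Proof.
  induction p1; simpl; intros H.
  - destruct a, a'; auto.
  - destruct a as [e a], a' as [e' a']; simpl in H. injection H; intros H1 H2.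
    destruct (IHp1 _ _ _ _ _ H1); subst; auto.
Qed.

Lemma legs_app_split {x y z : Ob E} (p1 : Path x y) (p2 : Path y z) (w : Ob E) (l : Legs (app p1 p2) w) :
  exists l1 l2, l = legs_app p1 p2 l1 l2.
Proof.
  induction p1; simpl in *.
  - exists tt, l; auto.
  - destruct l as [e l]. destruct (IHp1 _ l) as [l1 [l2 H]]. exists (e, l1), l2. simpl; congruence.
Qed.

Lemma legs_ok_app {x y z : Ob E} (p1 : Path x y) (p2 : Path y z) (w : Ob E) (f : Hom x w) g l1 l2 :
  legs_ok (app p1 p2) f g (legs_app p1 p2 l1 l2) -> exists h, legs_ok p1 f h l1 /\ legs_ok p2 h g l2.
Proof.
  revert f; induction p1; simpl; intros f H.
  - exists f; auto.
  - destruct l1 as [e l1]; simpl in *. destruct H as [H1 H2].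
    destruct (IHp1 _ _ _ _ H2) as [h [A B]]. exists h; auto.
Qed.

Lemma plength_app {x y z : Ob E} (p1 : Path x y) (p2 : Path y z) : plength (app p1 p2) = plength p1 + plength p2.
Proof. induction p1; simpl; auto. Qed.

Lemma path_split : forall k {x y : Ob E} (p : Path x y), k <= plength p ->
  exists u1 (p1 : Path x u1) p2, app p1 p2 = p /\ plength p1 = k.
Proof.
  induction k; intros x y p H.
  - exists x, (pnil x), p; auto.
  - destruct p; simpl in H. lia.
    destruct (IHk _ _ p ltac:(lia)) as [u1 [p1 [p2 [e h]]]].
    exists u1, (pcons C p1), p2; simpl; split; congruence.
Qed.

Lemma path_split_unique {x y a a' : Ob E} (p1 : Path x a) (p2 : Path a y) (p1' : Path x a') (p2' : Path a' y) :
  app p1 p2 = app p1' p2' -> plength p1 = plength p1' ->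
  existT (fun a => (Path x a * Path a y)%type) a (p1, p2) = existT _ a' (p1', p2').
Proof.
  revert a' p1' p2'; induction p1; intros a' p1' p2' H L.
  - destruct p1'; simpl in L; [|discriminate]. simpl in H; subst; reflexivity.
  - dependent destruction p1'; simpl in L; [discriminate|].
    simpl in H. dependent destruction H.
    specialize (IHp1 _ _ _ _ x ltac:(simpl in L; lia)). dependent destruction IHp1. reflexivity.
Qed.


Fixpoint canq (w : Ob E) (m : nat) (a : Ob E) (la : Hom a w) (b : Ob E) (lb : Hom b w) : Path a b :=
  match m with
  | 0 => pcons (Build_Cospan a b w la lb) (pnil b)
  | S m' => pcons (Build_Cospan a w w la (idm w)) (canq w m' w (idm w) b lb)
  end.

Fixpoint ids (w : Ob E) (m : nat) (a : Ob E) (la : Hom a w) (b : Ob E) (lb : Hom b w) :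
  Legs (canq w m a la b lb) w :=
  match m return Legs (canq w m a la b lb) w with
  | 0 => (idm w, tt)
  | S m' => (idm w, ids w m' w (idm w) b lb)
  end.

Lemma ids_ok w m : forall a (la : Hom a w) b (lb : Hom b w),
  legs_ok (canq w m a la b lb) la lb (ids w m a la b lb).
Proof.
  induction m; intros; simpl; rewrite comp_id_l; split; auto.
  - apply comp_id_l.
  - rewrite comp_id_l. apply IHm.
Qed.

Lemma arities_length {u u' v v' : Ob E} {p : Path u u'} {q : Path v v'} {s s'}
  (r : Row p q s s') : length (row_arities r) = plength q.
Proof. induction r; simpl; auto. Qed.

Lemma arities_sum {u u' v v' : Ob E} {p : Path u u'} {q : Path v v'} {s s'}
  (r : Row p q s s') : list_sum (row_arities r) = plength p.
Proof. induction r; simpl; auto. rewrite plength_app; simpl in *; lia. Qed.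

Lemma exist_canon (w : Ob E) : forall ks m {u u' : Ob E} (p : Path u u') a (la : Hom a w) b (lb : Hom b w)
  (l : Legs p w) g g' F G,
  length ks = S m -> list_sum ks = plength p -> legs_ok p F G l -> F = comp la g -> G = comp lb g' ->
  exists rc : Row p (canq w m a la b lb) g g',
    row_arities rc = ks /\ compose_legs rc (ids w m a la b lb) = l.
Proof.
  induction ks as [|k ks IH]; intros m u u' p a la b lb l g g' F G Hlen Hsum Hok HF HG;
    simpl in Hlen; [discriminate|].
  simpl in Hsum.
  destruct (path_split k p ltac:(lia)) as [u1 [p1 [p2 [e hk]]]]. subst p.
  destruct (legs_app_split p1 p2 w l) as [l1 [l2 ?]]. subst l.
  destruct (legs_ok_app _ _ _ _ _ _ _ Hok) as [h [H1 H2]].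
  rewrite plength_app in Hsum.
  destruct m as [|m].
  - destruct ks; [|discriminate]. simpl in Hsum.
    dependent destruction p2; [|simpl in Hsum; lia].
    simpl in H2. subst.
    unshelve eexists (rcons ((exist _ l1 _) : Cell p1 (Build_Cospan a b w la lb) g g') (rnil _ b g')).
    + exact H1.
    + simpl. destruct l2. rewrite legs_post_id. auto.
  - assert (Hid : h = comp (idm w) h) by (symmetry; apply comp_id_l).
    destruct (IH m _ _ p2 w (idm w) b lb l2 h g' h G ltac:(simpl in Hlen; lia) ltac:(lia) H2 Hid HG)
      as [rc2 [A B]].
    subst F.
    unshelve eexists (rcons ((exist _ l1 _) : Cell p1 (Build_Cospan a w w la (idm w)) g h) rc2).
    + simpl. rewrite comp_id_l. exact H1.
    + simpl. rewrite legs_post_id, A, B, hk. auto.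
Qed.

Lemma plength_canq w m : forall a (la : Hom a w) b (lb : Hom b w), plength (canq w m a la b lb) = S m.
Proof. induction m; intros; simpl; auto. Qed.

Lemma row_cons_inv {u u' v v1 v' : Ob E} {p : Path u u'} {C : Cospan v v1} {q : Path v1 v'} {s s'}
  (r : Row p (pcons C q) s s') :
  exists u1 (p1 : Path u u1) p2 s1 (al : Cell p1 C s s1) (rest : Row p2 q s1 s'),
    app p1 p2 = p /\ r ~= rcons al rest.
Proof.
  dependent destruction r. do 6 eexists. split; reflexivity.
Qed.

Lemma row_jm_arities {u u' v v' : Ob E} (P P' : Path u u') (q : Path v v') s s'
  (r : Row P q s s') (r' : Row P' q s s') : P = P' -> r ~= r' -> row_arities r = row_arities r'.
Proof. intros e J. subst P'. now rewrite (JMeq_eq J). Qed.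

Lemma row_nil_inv {u u' v : Ob E} {p : Path u u'} {s s'} (r : Row p (pnil v) s s') :
  exists e : u = u', p ~= pnil u /\ s ~= s' /\ r ~= rnil u v s.
Proof. dependent destruction r. exists eq_refl. auto. Qed.

Lemma main (w : Ob E) : forall u u' v v' (p : Path u u') (q : Path v v') s s' (r : Row p q s s')
  (lb0 : Legs q w) (fL : Hom v w) (fR : Hom v' w), legs_ok q fL fR lb0 ->
  forall m a b (la : Hom a w) (lb : Hom b w) g g' (rc : Row p (canq w m a la b lb) g g') (t : Hom v a) (t' : Hom v' b),
  row_arities r = row_arities rc ->
  compose_legs r lb0 = compose_legs rc (ids w m a la b lb) ->
  fL = comp la t -> fR = comp lb t' -> g = comp t s -> g' = comp t' s' ->
  exists sg : Row q (canq w m a la b lb) t t', VRel r sg rc /\ lb0 = compose_legs sg (ids w m a la b lb).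
Proof.
  induction r as [u v s|u u1 u' v v1 v' p1 C s s1 al p2 q s' r2 IH];
    intros lb0 fL fR Hok m a b la lb g g' rc t t' Har Hcomp HfL HfR Hg Hg'.
  - exfalso. pose proof (arities_length rc) as L. rewrite <- Har, plength_canq in L. discriminate.
  - destruct lb0 as [f1 lb2]. destruct Hok as [Hok1 Hok2].
    destruct m as [|m].
    all: simpl canq in rc; simpl in Hok1, Hok2.
    all: destruct (row_cons_inv rc) as [u1' [p1' [p2' [s1' [ga [rc2 [e J]]]]]]].
    all: pose proof (row_jm_arities _ _ _ _ _ rc (rcons ga rc2) (eq_sym e) J) as Har2.
    all: pose proof (eq_trans Har Har2) as Har3; clear Har Har2; simpl in Har3; injection Har3 as Hk Har.
    all: pose proof (path_split_unique _ _ _ _ (eq_sym e) Hk) as ES.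
    all: dependent destruction ES.
    all: simpl in Hcomp; apply legs_app_inj in Hcomp; destruct Hcomp as [Hc1 Hc2].
    all: rewrite legs_post_id in Hc1.
    + clear IH. dependent destruction r2.
      * dependent destruction rc2. destruct lb2. simpl in Hok2.
        unshelve eexists (rcons ((exist _ (f1, tt) _) : Cell (pcons C (pnil _)) (Build_Cospan a _ w la lb) t t') (rnil _ _ t')).
        { simpl. split; assumption. }
        split.
        -- apply vcons; [reflexivity | simpl; symmetry; exact Hc1 | apply vnil; reflexivity].
        -- simpl. rewrite comp_id_l. reflexivity.
      * exfalso. pose proof (arities_length rc2) as L. rewrite <- Har in L. simpl in L. discriminate.
    + assert (Hkey : s1' = comp (comp f1 (rleg _ _ C)) s1).
      { pose proof (proj2_sig ga) as G1. pose proof (legs_post_ok _ _ _ f1 _ _ _ (proj2_sig al)) as A1.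
        simpl in G1, A1. change (proj1_sig ga) with (cell_legs ga) in G1.
        change (proj1_sig al) with (cell_legs al) in A1. rewrite Hc1 in A1.
        replace (comp f1 (comp (lleg _ _ C) s)) with (comp la (comp t s)) in A1
          by (rewrite !comp_assoc, HfL; reflexivity).
        rewrite comp_id_l in G1. rewrite <- comp_assoc. exact (legs_ok_end _ _ _ _ _ _ G1 A1). }
      destruct (IH lb2 _ _ Hok2 m w b (idm w) lb s1' _ rc2 (comp f1 (rleg _ _ C)) t' Har Hc2
                  ltac:(symmetry; apply comp_id_l) eq_refl Hkey eq_refl) as [sg2 [V2 L2]].
      unshelve eexists (rcons ((exist _ (f1, tt) _) : Cell (pcons C (pnil _)) (Build_Cospan a w w la (idm w)) t (comp f1 (rleg _ _ C))) sg2).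
      { simpl. split; [assumption | symmetry; apply comp_id_l]. }
      split.
      * apply vcons; [reflexivity | simpl; symmetry; exact Hc1 | exact V2].
      * simpl. rewrite comp_id_l, <- L2. reflexivity.
Qed.
End S.

Theorem proposition7p4 (E : Category) : @cospan_has_globular_decompositions E.
Proof.
  intros n x y z0 z1 p T c0 c1 al ks Hn Hks Hsum.
  destruct ks as [|k ks']; [contradiction|].
  set (w := apex _ _ T).
  set (m := length ks').
  set (la := comp (lleg _ _ T) (idm z0)).
  set (lb := comp (rleg _ _ T) (idm z1)).
  assert (E1 : comp (lleg _ _ T) c0 = comp la c0) by (unfold la; rewrite <- comp_assoc, comp_id_l; reflexivity).
  assert (E2 : comp (rleg _ _ T) c1 = comp lb c1) by (unfold lb; rewrite <- comp_assoc, comp_id_l; reflexivity).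
  destruct (exist_canon w (k :: ks') m p z0 la z1 lb (cell_legs al) c0 c1 _ _ eq_refl
              ltac:(rewrite Hsum, Hn; reflexivity) (proj2_sig al) E1 E2) as [rc [A B]].
  set (bc := (exist _ (ids w m z0 la z1 lb) (ids_ok w m z0 la z1 lb))
             : Cell (canq w m z0 la z1 lb) T (idm z0) (idm z1)).
  set (d0 := (existT _ (canq w m z0 la z1 lb) (rc, bc)) : DecData p T c0 c1).
  assert (Hd0 : is_glob_decomp al (k :: ks') d0) by (split; simpl; auto).
  split; [exists d0; exact Hd0|].
  assert (S0 : forall d, is_glob_decomp al (k :: ks') d -> slide_rel d0 d).
  { intros [q [r bt]] [Ar Br]. simpl in Ar, Br. unfold slide_rel; simpl.
    destruct (main w _ _ _ _ p q c0 c1 r (cell_legs bt) _ _ (proj2_sig bt) m z0 z1 la lb c0 c1 rc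
                (idm z0) (idm z1) (eq_trans Ar (eq_sym A)) (eq_trans Br (eq_sym B))
                ltac:(symmetry; apply comp_id_r) ltac:(symmetry; apply comp_id_r)
                ltac:(symmetry; apply comp_id_l) ltac:(symmetry; apply comp_id_l)) as [sg [V L]].
    exists sg; split; auto. }
  intros d d' Hd Hd'.
  apply rst_trans with d0; [apply rst_sym, rst_step | apply rst_step]; auto.
Qed.
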